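(* Every finite group with nonabelian monolith is strongly verbally closed. Moreover, every such group $H$ is a retract of every finite group $G$ that contains $H$ and satisfies all identities of $H$.
   Context: The monolith of a group is the intersection of all its nonidentity normal subgroups. A subgroup $H$ of $G$ is a retract of $G$ if there is an endomorphism $\rho$ of $G$ with $\rho\circ\rho=\rho$ and $\rho(G)=H$. A subgroup $H$ of $G$ is verbally closed if every equation $w(x_1,\dots,x_n)=h$ with $w$ in a free group and $h\in H$ solvable in $G$ is solvable in $H$; algebraically closed if every finite system of equations with coefficients from $H$ solvable in $G$ is solvable in $H$. A group is strongly verbally closed if it is algebraically closed in every group containing it as a verbally closed subgroup. *)

(* Defs.v *)
From mathcomp Require Import all_boot all_fingroup.
Set Implicit Arguments. Unset Strict Implicit. Unset Printing Implicit Defensive.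

Record Grp := MkGrp {
  gcar :> Type;
  gmul : gcar -> gcar -> gcar;
  ginv : gcar -> gcar;
  gone : gcar;
  gmulA : forall x y z, gmul x (gmul y z) = gmul (gmul x y) z;
  gmul1 : forall x, gmul gone x = x;
  gmulV : forall x, gmul (ginv x) x = gone
}.

Inductive word (C : Type) : Type :=
| wvar of nat
| wcst of C
| wone
| wmul of word C & word C
| winv of word C.
Arguments wone {C}.

Fixpoint weval (G : Grp) (C : Type) (c : C -> G) (a : nat -> G) (w : word C) : G :=
  match w with
  | wvar i => a i
  | wcst k => c k
  | wone => gone G
  | wmul u v => gmul (weval c a u) (weval c a v)
  | winv u => ginv (weval c a u)
  end.

Definition fword := word Empty_set.
Definition noconst (G : Grp) : Empty_set -> G := fun e => match e with end.

Definition verbally_closed (G : Grp) (S : G -> Prop) : Prop :=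
  forall (w : fword) (h : G), S h ->
    (exists a : nat -> G, weval (noconst G) a w = h) ->
    exists a : nat -> G, (forall i, S (a i)) /\ weval (noconst G) a w = h.

Definition algebraically_closed (G : Grp) (S : G -> Prop) : Prop :=
  forall (n : nat) (sys : 'I_n -> word {x : G | S x} * word {x : G | S x}),
    (exists a : nat -> G, forall k,
        weval (@proj1_sig _ _) a (sys k).1 = weval (@proj1_sig _ _) a (sys k).2) ->
    exists a : nat -> G, (forall i, S (a i)) /\ forall k,
        weval (@proj1_sig _ _) a (sys k).1 = weval (@proj1_sig _ _) a (sys k).2.

(* The group (K,S) (S a subgroup of K) is strongly verbally closed: for every
   group G and every embedding f of S into G such that f(S) is verbally closed
   in G, f(S) is algebraically closed in G. *)
Definition strongly_verbally_closed (K : Grp) (S : K -> Prop) : Prop :=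
  forall (G : Grp) (f : K -> G),
    (forall x y, S x -> S y -> f (gmul x y) = gmul (f x) (f y)) ->
    (forall x y, S x -> S y -> f x = f y -> x = y) ->
    verbally_closed (fun g => exists2 x, S x & f x = g) ->
    algebraically_closed (fun g => exists2 x, S x & f x = g).

Arguments strongly_verbally_closed : clear implicits.

Definition fingrp (gT : finGroupType) : Grp :=
  @MkGrp gT mulg invg 1%g (@mulgA gT) (@mul1g gT) (@mulVg gT).

Local Open Scope group_scope.

(* Monolith: intersection of all nonidentity normal subgroups of H
   (intersected with H so that the empty intersection is H itself). *)
Definition monolith (gT : finGroupType) (H : {set gT}) : {set gT} :=
  H :&: \bigcap_(N : {group gT} | (N <| H) && (N :!=: 1)) N.

Definition satisfies_identities_of (gT : finGroupType) (H G : {set gT}) : Prop :=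
  forall u v : fword,
    (forall a : nat -> gT, (forall i, a i \in H) ->
        weval (noconst (fingrp gT)) a u = weval (noconst (fingrp gT)) a v) ->
    (forall a : nat -> gT, (forall i, a i \in G) ->
        weval (noconst (fingrp gT)) a u = weval (noconst (fingrp gT)) a v).

Definition retract (gT : finGroupType) (G H : {set gT}) : Prop :=
  exists rho : gT -> gT,
    {in G &, {morph rho : x y / x * y}} /\
    {in G, forall x, rho (rho x) = rho x} /\
    rho @: G = H.

(* Main.v *)
From HB Require Import structures.
Require Import Defs.
From mathcomp Require Import all_boot all_fingroup.
From Stdlib Require Import ClassicalEpsilon.
Set Implicit Arguments. Unset Strict Implicit. Unset Printing Implicit Defensive.
Local Open Scope group_scope.

Definition pb (P : Prop) : bool := if excluded_middle_informative P then true else false.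
Lemma pbP P : reflect P (pb P).
Proof. by rewrite /pb; case: excluded_middle_informative => h; constructor. Qed.

Fixpoint wbnd (C : Type) (n : nat) (w : word C) : bool :=
  match w with
  | wvar i => i < n
  | wcst _ => true
  | wone => true
  | wmul u v => wbnd n u && wbnd n v
  | winv u => wbnd n u
  end.

Lemma weval_bnd (G : Grp) C (c : C -> G) a a' n w :
  wbnd n w -> (forall i, i < n -> a i = a' i) -> weval c a w = weval c a' w.
Proof.
move=> bw eqa; elim: w bw => /=.
- by move=> i bi; exact: eqa.
- by [].
- by [].
- by move=> u IHu v IHv /andP[bu bv]; rewrite IHu // IHv.
- by move=> u IHu bu; rewrite IHu.
Qed.

Section PW.
Variables (gT : finGroupType) (T : finType).
Definition pw := {ffun T -> gT}.
HB.instance Definition _ := Finite.on pw.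
Definition pw_mul (p q : pw) : pw := [ffun i => p i * q i].
Definition pw_one : pw := [ffun => 1].
Definition pw_inv (p : pw) : pw := [ffun i => (p i)^-1].
Lemma pw_mulA : associative pw_mul.
Proof. by move=> p q r; apply/ffunP => i; rewrite !ffunE mulgA. Qed.
Lemma pw_mul1 : left_id pw_one pw_mul.
Proof. by move=> p; apply/ffunP => i; rewrite !ffunE mul1g. Qed.
Lemma pw_mulV : left_inverse pw_one pw_inv pw_mul.
Proof. by move=> p; apply/ffunP => i; rewrite !ffunE mulVg. Qed.
HB.instance Definition _ := Finite_isGroup.Build pw pw_mulA pw_mul1 pw_mulV.
Lemma pwM (p q : pw) i : (p * q) i = p i * q i. Proof. by rewrite ffunE. Qed.
Lemma pwV (p : pw) i : (p^-1) i = (p i)^-1. Proof. by rewrite ffunE. Qed.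
Lemma pw1 i : (1 : pw) i = 1. Proof. by rewrite ffunE. Qed.
End PW.

Section CoreL.
Variables (gT : finGroupType) (G H J : {group gT}) (I : finType).
Variable K : {set I} -> {group gT}.
Variables x y : gT.
Hypotheses (sHG : H \subset G) (nJG : J <| G) (tiJH : J :&: H = 1).
Hypothesis maxJ : forall X : {group gT}, X <| G -> J \subset X -> X :&: H = 1 -> X :=: J.
Hypothesis monoxy : forall N : {group gT}, N <| H -> N :!=: 1 -> (x \in N) && (y \in N).
Hypothesis nKG : forall S, K S <| G.
Hypothesis K0 : H \subset K set0.
Hypothesis KR : forall S1 S2 a b, a \in K S1 -> b \in K S2 -> [~ a, b] \in K (S1 :|: S2).
Hypothesis KT : K setT :=: 1.
Hypothesis Kcount : forall i, K [set i] \subset J -> G \subset H * J.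
Hypotheses (Hx : x \in H) (Hy : y \in H) (nxy : [~ x, y] != 1).

Lemma coreL : G \subset H * J.
Proof.
case: (boolP (G \subset H * J)) => // nGHJ.
have sJG : J \subset G by case/andP: nJG.
have key : forall S, (K S <*> J) :&: H != 1 -> (x \in K S <*> J) && (y \in K S <*> J).
  move=> S ntS.
  have nX : (K S <*> J) :&: H <| H.
    by rewrite setIC; exact: normalGI sHG (normalY (nKG S) nJG).
  by case/andP: (monoxy nX ntS); rewrite !inE => /andP[-> _] /andP[-> _].
have sing : forall i, (x \in K [set i] <*> J) && (y \in K [set i] <*> J).
  move=> i; apply: key; apply/negP => /eqP ti.
  have eqJ := maxJ (normalY (nKG _) nJG) (joing_subr _ _) ti.
  have : K [set i] \subset J by rewrite -eqJ joing_subl.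
  by move/Kcount; rewrite (negbTE nGHJ).
have decomp : forall S z, z \in K S <*> J -> exists2 k, k \in K S & exists2 j, j \in J & z = k * j.
  move=> S z; rewrite norm_joinEr; last first.
    by apply: subset_trans sJG _; case/andP: (nKG S).
  by case/mulsgP=> k j Kk Jj ->; exists k => //; exists j.
have step : forall S1 S2, (x \in K S1 <*> J) -> (y \in K S2 <*> J) ->
    (x \in K (S1 :|: S2) <*> J) && (y \in K (S1 :|: S2) <*> J).
  move=> S1 S2 xS yS; apply: key.
  case/decomp: xS => k1 Kk1 [j1 Jj1 ex]; case/decomp: yS => k2 Kk2 [j2 Jj2 ey].
  have sK : forall S, K S \subset G by move=> S; case/andP: (nKG S).
  have nJ : G \subset 'N(J) by case/andP: nJG.
  have Gk1 : k1 \in G by exact: subsetP (sK _) _ Kk1.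
  have Gk2 : k2 \in G by exact: subsetP (sK _) _ Kk2.
  have Gj1 : j1 \in G by exact: subsetP sJG _ Jj1.
  have Gj2 : j2 \in G by exact: subsetP sJG _ Jj2.
  have Nk1 := subsetP nJ _ Gk1; have Nk2 := subsetP nJ _ Gk2.
  have ec : coset J [~ x, y] = coset J [~ k1, k2].
    rewrite ex ey !morphR ?groupM ?(subsetP nJ) //.
    by rewrite /= !coset_kerr.
  have Nxy : [~ x, y] \in 'N(J).
    by rewrite (subsetP nJ) // groupR // (subsetP sHG).
  have Nk : [~ k1, k2] \in 'N(J) by rewrite groupR.
  have : [~ x, y] \in J :* [~ k1, k2].
    by rewrite -val_coset // -ec val_coset // rcoset_refl.
  case/rcosetP=> j Jj exy.
  apply/negP => /eqP ti.
  have : [~ x, y] \in (K (S1 :|: S2) <*> J) :&: H.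
    rewrite inE (groupR Hx Hy) andbT exy groupM //.
      exact: subsetP (joing_subr _ _) _ Jj.
    exact: subsetP (joing_subl _ _) _ (KR Kk1 Kk2).
  by rewrite ti inE (negbTE nxy).
have all : forall n (S : {set I}), #|S| = n -> (x \in K S <*> J) && (y \in K S <*> J).
  elim=> [|n IH] S cS.
    move/eqP: cS; rewrite cards_eq0 => /eqP ->.
    by rewrite !(subsetP (joing_subl _ _)) // (subsetP K0).
  have [i Si] : exists i, i \in S.
    by apply/set0Pn; rewrite -cards_eq0 cS.
  have cS' : #|S :\ i| = n by rewrite (cardsD1 i S) Si in cS; case: cS.
  case/andP: (IH _ cS') => xS _; case/andP: (sing i) => _ yi.
  by rewrite -(setD1K Si) setUC; apply: step.
case/andP: (all _ setT erefl) => xT _.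
case/andP: (all _ setT erefl) => _ yT.
move: xT yT; rewrite KT joing1G => xJ yJ.
have : [~ x, y] \in J :&: H by rewrite inE groupR //= groupR.
by rewrite tiJH inE (negbTE nxy).
Qed.
End CoreL.

Section Part2.
Variable gT : finGroupType.
Notation nc := (noconst (fingrp gT)).
Notation ev a w := (weval nc a w : gT).

Lemma evM a u v : ev a (wmul u v) = ev a u * ev a v. Proof. by []. Qed.
Lemma evV a u : ev a (winv u) = (ev a u)^-1. Proof. by []. Qed.
Lemma ev1 a : ev a wone = 1. Proof. by []. Qed.
Lemma evX a i : ev a (wvar _ i) = a i. Proof. by []. Qed.

Definition wcomm (C : Type) (u v : word C) := wmul (winv u) (wmul (winv v) (wmul u v)).
Lemma evR a u v : ev a (wcomm u v) = [~ ev a u, ev a v]. Proof. by rewrite /commg /conjg /= !mulgA. Qed.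


Definition extt (N : nat) (t : {ffun 'I_N -> gT}) (i : nat) : gT :=
  oapp t 1 (insub i).

Lemma extt_lt N (t : {ffun 'I_N -> gT}) i (lt : i < N) : extt t i = t (Ordinal lt).
Proof. by rewrite /extt insubT /=; congr (t _); apply: val_inj. Qed.

Lemma extt_in N (t : {ffun 'I_N -> gT}) (A : {group gT}) i :
  (forall j, t j \in A) -> extt t i \in A.
Proof. by rewrite /extt; case: insub => [o|] /= At; rewrite ?At ?group1. Qed.

Lemma nonab_pair (A : {set gT}) : ~~ abelian A ->
  exists x y, [/\ x \in A, y \in A & [~ x, y] != 1].
Proof.
move=> nab.
case: (pickP [pred p : gT * gT | (p.1 \in A) && (p.2 \in A) && ([~ p.1, p.2] != 1)]).
  by move=> [x y] /= /andP[/andP[Ax Ay] nxy]; exists x, y.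
move=> none; case/negP: nab; apply/centsP => a Aa b Ab; apply/commgP.
by move: (none (a, b)) => /=; rewrite Aa Ab /= => /negbFE.
Qed.

Theorem part2 (H G : {group gT}) :
  ~~ abelian (monolith H) -> H \subset G -> satisfies_identities_of H G -> retract G H.
Proof.
move=> nab sHG laws.
have [x [y [Mx My nxy]]] := nonab_pair nab.
have sMH : monolith H \subset H by apply: subsetIl.
have Hx : x \in H := subsetP sMH _ Mx.
have Hy : y \in H := subsetP sMH _ My.
have monoxy : forall N : {group gT}, N <| H -> N :!=: 1 -> (x \in N) && (y \in N).
  move=> N nNH ntN.
  have sMN : monolith H \subset N.
    apply: subset_trans (subsetIr _ _) _.
    by apply: (bigcap_inf N); rewrite nNH ntN.
  by rewrite !(subsetP sMN).
pose gP := [pred X : {group gT} | (X <| G) && (X :&: H == 1)].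
have gP1 : gP 1%G by rewrite /= normal1 setI1g eqxx.
have [J maxJ _] := maxgroup_exists gP1.
case/maxgroupP: maxJ => /andP[nJG /eqP tiJH] maxJ.
have sJG : J \subset G by case/andP: nJG.
pose N := #|G|.
pose g (i : nat) := nth 1 (enum G) i.
have gG : forall i, g i \in G.
  move=> i; rewrite /g; case: (ltnP i (size (enum G))) => li.
    by rewrite -mem_enum mem_nth.
  by rewrite nth_default.
have gidx : forall z, z \in G -> g (index z (enum G)) = z.
  by move=> z Gz; rewrite /g nth_index // mem_enum.
have idxN : forall z, z \in G -> index z (enum G) < N.
  by move=> z Gz; rewrite /N cardE index_mem mem_enum.
pose I := {ffun 'I_N -> gT}.
pose Kset (S : {set I}) := [set z in G | pb (exists w : fword, [/\ wbnd N w, ev g w = z &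
   forall t : I, t \in S -> (forall j, t j \in H) -> ev (extt t) w = 1])].
have KsetP : forall (S : {set I}) z, reflect (exists w : fword, [/\ wbnd N w, ev g w = z &
   forall t : I, t \in S -> (forall j, t j \in H) -> ev (extt t) w = 1]) (z \in Kset S).
  move=> S z; rewrite inE; apply: (iffP andP) => [[_ /pbP //]|[w [bw ez ht]]].
  split; last by apply/pbP; exists w.
  rewrite -ez; elim: (w) => /= [i|[]| |u IHu v IHv|u IHu]; rewrite ?group1 ?groupM ?groupV //.
have Kgs : forall S : {set I}, group_set (Kset S).
  move=> S; apply/group_setP; split.
    by apply/KsetP; exists wone; split => // t _ _.
  move=> a b /KsetP[u [bu <- hu]] /KsetP[v [bv <- hv]].
  apply/KsetP; exists (wmul u v); split => //=; first by rewrite bu bv.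
  by move=> t St Ht; rewrite /= hu // hv // mulg1.
pose K S := Group (Kgs S).
have sKG : forall S, K S \subset G by move=> S; apply/subsetP => z; rewrite inE => /andP[].
have nKG : forall S, K S <| G.
  move=> S; rewrite /normal sKG; apply/subsetP => a Ga; rewrite inE; apply/subsetP => z.
  rewrite mem_conjg => /KsetP[w [bw ew hw]].
  apply/KsetP; exists (wmul (winv (wvar _ (index a (enum G)))) (wmul w (wvar _ (index a (enum G))))).
  split => /=; first by rewrite bw idxN.
    by rewrite gidx // ew; exact: conjgKV.
  by move=> t St Ht; rewrite /= hw // mul1g mulVg.
have K0 : H \subset K set0.
  apply/subsetP => z Hz; have Gz := subsetP sHG _ Hz.
  apply/KsetP; exists (wvar _ (index z (enum G))); split => //=; first exact: idxN.
    by rewrite gidx.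
  by move=> t; rewrite inE.
have KR : forall S1 S2 a b, a \in K S1 -> b \in K S2 -> [~ a, b] \in K (S1 :|: S2).
  move=> S1 S2 a b /KsetP[u [bu <- hu]] /KsetP[v [bv <- hv]].
  apply/KsetP; exists (wcomm u v); split; first by rewrite /= bu bv.
    by rewrite evR.
  move=> t; rewrite inE => /orP[St|St] Ht; rewrite evR.
    by rewrite (hu t St Ht) comm1g.
  by rewrite (hv t St Ht) commg1.
have KT : K setT :=: 1.
  apply/eqP; rewrite eqEsubset sub1G andbT; apply/subsetP => z /KsetP[w [bw <- hw]].
  have := laws w wone _ g gG; rewrite inE => -> //.
  move=> a Ha; rewrite ev1.
  rewrite (@weval_bnd (fingrp gT) _ _ a (extt [ffun j : 'I_N => a j]) N) //.
    by apply: hw; [rewrite inE | move=> j; rewrite ffunE].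
  by move=> i li; rewrite extt_lt ffunE.
have Kcount : forall t, K [set t] \subset J -> G \subset H * J.
  move=> t sKJ.
  case: (boolP [forall j, t j \in H]) => [/forallP Ht|nHt]; last first.
    have : G \subset K [set t].
      apply/subsetP => z Gz; apply/KsetP; exists (wvar _ (index z (enum G))).
      split => //=; first exact: idxN.
        by rewrite gidx.
      move=> t'; rewrite inE => /eqP -> Ht; case/negP: nHt; exact/forallP.
    move/subset_trans/(_ sKJ) => sGJ; apply: subset_trans sGJ _; exact: mulG_subr.
  pose phi z := extt t (index z (enum G)).
  pose F' h := J :* odflt 1 [pick z in G | phi z == h].
  have eqF : {in G, forall z, rcoset J z = F' (phi z)}.
    move=> z Gz; rewrite /F'; case: pickP => [z' /andP[Gz' /eqP ez]|]; last first.
      by move/(_ z); rewrite Gz eqxx.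
    rewrite /= rcosetE; apply/rcoset_eqP; rewrite mem_rcoset.
    apply: (subsetP sKJ); apply/KsetP.
    exists (wmul (wvar _ (index z (enum G))) (winv (wvar _ (index z' (enum G))))).
    split => /=; first by rewrite !idxN.
      by rewrite !gidx.
    by move=> t'; rewrite inE => /eqP -> _; rewrite -/(phi z) -/(phi z') ez mulgV.
  have cGJ : #|G : J| <= #|H|.
    rewrite /indexg /rcosets (eq_in_imset eqF) imset_comp.
    apply: leq_trans (leq_imset_card _ _) _; apply: subset_leq_card.
    by apply/subsetP => _ /imsetP[z _ ->]; apply: extt_in.
  have sHJG : H * J \subset G by apply: mul_subG.
  have : H * J == G.
    rewrite eqEcard sHJG /= TI_cardMg; last by rewrite setIC.
    by rewrite -(Lagrange sJG) mulnC leq_mul2r cGJ orbT.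
  by move/eqP => ->.
have sGHJ := coreL sHG nJG tiJH (fun X nX sJX ti => maxJ X (introT andP (conj nX (introT eqP ti))) sJX)
  monoxy nKG K0 KR KT Kcount Hx Hy nxy.
have defG : J * H = G.
  apply/eqP; rewrite eqEsubset mul_subG //= -(normC (subset_trans sHG (normal_norm nJG))).
  by [].
have cmp : H \in [complements to J in G] by apply/complP.
exists (remgr J H); split; first exact: remgrM.
split.
- move=> z Gz; apply: remgr_id => //; apply: mem_remgr; rewrite defG //.
- apply/eqP; rewrite eqEsubset; apply/andP; split.
    by apply/subsetP => _ /imsetP[z Gz ->]; apply: mem_remgr; rewrite defG.
  apply/subsetP => h Hh; apply/imsetP; exists h; first exact: subsetP sHG _ Hh.
  by rewrite remgr_id.
Qed.

End Part2.

Fixpoint vb (C : Type) (w : word C) : nat :=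
  match w with
  | wvar i => i.+1
  | wcst _ => 0
  | wone => 0
  | wmul u v => maxn (vb u) (vb v)
  | winv u => vb u
  end.

Lemma wbnd_mono C m m' (w : word C) : m <= m' -> wbnd m w -> wbnd m' w.
Proof.
move=> le; elim: w => /= [i li|c _|_|u IHu v IHv /andP[bu bv]|u IHu bu] //.
- exact: leq_trans li le.
- by rewrite IHu // IHv.
- exact: IHu.
Qed.

Lemma wbnd_vb C (w : word C) : wbnd (vb w) w.
Proof.
elim: w => /= [i|c|||u IHu] //.
by move=> u IHu v IHv; rewrite (wbnd_mono (leq_maxl _ _) IHu) (wbnd_mono (leq_maxr _ _) IHv).
Qed.

Lemma weval_ext (G : Grp) C (c : C -> G) a a' w :
  (forall i, a i = a' i) -> weval c a w = weval c a' w.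
Proof.
move=> e; elim: w => /= [i|k||u IHu v IHv|u IHu]; by rewrite ?e ?IHu ?IHv.
Qed.

Section GenMorph.
Variables aT rT : finGroupType.
Variables (D : {group aT}) (h : aT -> rT).
Hypothesis hM : {in D &, {morph h : x y / x * y}}.

Lemma morph1_in : h 1 = 1.
Proof.
have := hM (group1 D) (group1 D); rewrite mulg1 => e.
by apply: (mulgI (h 1)); rewrite -e mulg1.
Qed.

Lemma morphV_in x : x \in D -> h x^-1 = (h x)^-1.
Proof.
move=> Dx; apply: (mulgI (h x)); rewrite -hM ?groupV // !mulgV; exact: morph1_in.
Qed.

Lemma ev_morph (a : nat -> aT) (w : fword) : (forall i, a i \in D) ->
  (weval (noconst (fingrp aT)) a w \in D) /\
  h (weval (noconst (fingrp aT)) a w) = weval (noconst (fingrp rT)) (fun i => h (a i)) w.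
Proof.
move=> Da; elim: w => /= [i|[]| |u [Du eu] v [Dv ev]|u [Du eu]].
- by split.
- by rewrite group1 morph1_in.
- by rewrite groupM // hM // eu ev.
- by rewrite groupV // morphV_in // eu.
Qed.
End GenMorph.

Lemma ev_pw (gT : finGroupType) (T : finType) (p : nat -> pw gT T) (w : fword) i :
  (weval (noconst (fingrp (pw gT T))) p w : pw gT T) i =
  weval (noconst (fingrp gT)) (fun j => p j i) w.
Proof.
elim: w => /= [j|[]| |u IHu v IHv|u IHu].
- by [].
- by rewrite pw1.
- by rewrite pwM IHu IHv.
- by rewrite pwV IHu.
Qed.

Section AbsGrp.
Variable G : Grp.
Lemma gmulVr (x : G) : gmul x (ginv x) = gone G.
Proof.
rewrite -[gmul x _]gmul1 -(gmulV (ginv x)) -gmulA (gmulA (ginv x)) gmulV gmul1.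
by rewrite gmulV.
Qed.
Lemma gmul1r (x : G) : gmul x (gone G) = x.
Proof. by rewrite -(gmulV x) gmulA gmulVr gmul1. Qed.
Lemma gmulI (x y z : G) : gmul x y = gmul x z -> y = z.
Proof. by move=> e; rewrite -(gmul1 y) -(gmulV x) -gmulA e gmulA gmulV gmul1. Qed.
Lemma ginv1 : ginv (gone G) = gone G.
Proof. by rewrite -[ginv _]gmul1r gmulV. Qed.
End AbsGrp.

Section Part1.
Variables (gT : finGroupType) (H : {group gT}).
Hypothesis nab : ~~ abelian (monolith H).
Variables (G : Grp) (f : gT -> G).
Hypothesis fM : forall x y, x \in H -> y \in H -> f (x * y) = gmul (f x) (f y).
Hypothesis finj : forall x y, x \in H -> y \in H -> f x = f y -> x = y.
Definition SS : G -> Prop := fun g => exists2 x, x \in H & f x = g.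
Hypothesis vc : verbally_closed SS.
Variables (nsys : nat) (sys : 'I_nsys -> word {x : G | SS x} * word {x : G | SS x}).
Variable (a : nat -> G).
Hypothesis sol : forall k, weval (@proj1_sig _ _) a (sys k).1 = weval (@proj1_sig _ _) a (sys k).2.

Notation nc := (noconst (fingrp gT)).
Notation ev a w := (weval nc a w : gT).
Notation Cc := {x : G | SS x}.

Definition eH := enum H.
Definition n := size eH.

Lemma f1 : f 1 = gone G.
Proof.
apply: (@gmulI _ (f 1)); rewrite -fM ?group1 // mulg1; exact/esym/gmul1r.
Qed.

Lemma fV x : x \in H -> f x^-1 = ginv (f x).
Proof.
move=> Hx; apply: (@gmulI _ (f x)); rewrite -fM ?groupV // mulgV f1 gmulVr //.
Qed.

Lemma f_ev (s : nat -> gT) (w : fword) : (forall i, s i \in H) ->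
  ev s w \in H /\ f (ev s w) = weval (noconst G) (fun i => f (s i)) w.
Proof.
move=> Hs; elim: w => /= [i|[]| |u [Hu eu] v [Hv ev]|u [Hu eu]].
- by split.
- by rewrite group1 f1.
- by rewrite groupM // fM // eu ev.
- by rewrite groupV // fV // eu.
Qed.

Definition yc (c : Cc) : gT :=
  proj1_sig (constructive_indefinite_description _
    (let: ex_intro2 x Hx ex := proj2_sig c in ex_intro (fun x => x \in H /\ f x = proj1_sig c) x (conj Hx ex))).

Lemma yc_spec c : yc c \in H /\ f (yc c) = proj1_sig c.
Proof. by rewrite /yc; case: constructive_indefinite_description. Qed.

Lemma nth_eH y : y \in H -> nth 1 eH (index y eH) = y.
Proof. by move=> Hy; rewrite nth_index // mem_enum. Qed.

Lemma idx_n y : y \in H -> index y eH < n.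
Proof. by move=> Hy; rewrite /n index_mem mem_enum. Qed.

Lemma nth_eH_in j : nth 1 eH j \in H.
Proof.
case: (ltnP j n) => lj; first by rewrite -mem_enum mem_nth.
by rewrite nth_default.
Qed.

Fixpoint tr (w : word Cc) : fword :=
  match w with
  | wvar i => wvar _ (n + i)
  | wcst c => wvar _ (index (yc c) eH)
  | wone => wone
  | wmul u v => wmul (tr u) (tr v)
  | winv u => winv (tr u)
  end.

Definition g (j : nat) : G := if j < n then f (nth 1 eH j) else a (j - n).

Lemma g_idx y : y \in H -> g (index y eH) = f y.
Proof. by move=> Hy; rewrite /g idx_n // nth_eH. Qed.

Lemma trE w : weval (@proj1_sig _ _) a w = weval (noconst G) g (tr w).
Proof.
elim: w => /= [i|c||u IHu v IHv|u IHu].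
- by rewrite /g ltnNge leq_addr /= addKn.
- by case: (yc_spec c) => Hy ey; rewrite g_idx.
- by [].
- by rewrite IHu IHv.
- by rewrite IHu.
Qed.

Definition k0 := \max_(k < nsys) maxn (vb (sys k).1) (vb (sys k).2).
Definition N := n + k0.

Lemma tr_bnd m w : wbnd m w -> wbnd (n + m) (tr w).
Proof.
elim: w => /= [i li|c _||u IHu v IHv /andP[bu bv]|u IHu bu] //.
- by rewrite ltn_add2l.
- by case: (yc_spec c) => Hy _; apply: leq_trans (idx_n Hy) (leq_addr _ _).
- by rewrite IHu // IHv.
- exact: IHu.
Qed.

Lemma sys_bnd k : wbnd N (tr (sys k).1) && wbnd N (tr (sys k).2).
Proof.
have le := @leq_bigmax _ (fun k : 'I_nsys => maxn (vb (sys k).1) (vb (sys k).2)) k.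
rewrite !tr_bnd //.
  exact: wbnd_mono (leq_trans (leq_maxr _ _) le) (wbnd_vb _).
exact: wbnd_mono (leq_trans (leq_maxl _ _) le) (wbnd_vb _).
Qed.

Definition Om := {ffun 'I_N -> gT}.
Definition PW := pw gT Om.
Definition Hv (om : Om) := [forall j, om j \in H].

Definition Ev (w : fword) : PW := [ffun om : Om => if Hv om then ev (extt om) w else 1].

Lemma EvM u v : Ev (wmul u v) = Ev u * Ev v.
Proof. by apply/ffunP => om; rewrite pwM !ffunE; case: (Hv om); rewrite ?mulg1. Qed.
Lemma EvV u : Ev (winv u) = (Ev u)^-1.
Proof. by apply/ffunP => om; rewrite pwV !ffunE; case: (Hv om); rewrite ?invg1. Qed.
Lemma Ev1 : Ev wone = 1.
Proof. by apply/ffunP => om; rewrite pw1 !ffunE; case: (Hv om). Qed.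

Definition gens := [set Ev (wvar _ j) | j : 'I_N].
Definition P := <<gens>>%G.

Lemma EvP w : Ev w \in P.
Proof.
elim: w => [i|[]||u IHu v IHv|u IHu].
- case: (ltnP i N) => li.
    by apply: mem_gen; apply/imsetP; exists (Ordinal li).
  have -> : Ev (wvar _ i) = 1.
    apply/ffunP => om; rewrite pw1 ffunE /= /extt insubF //; first by case: (Hv om).
    by apply/negbTE; rewrite -leqNgt.
  exact: group1.
- by rewrite Ev1 group1.
- by rewrite EvM groupM.
- by rewrite EvV groupV.
Qed.

Definition Hvs := [set p : PW | [forall om, p om \in H]].
Lemma Hvs_gs : group_set Hvs.
Proof.
apply/group_setP; split; first by rewrite inE; apply/forallP => om; rewrite pw1 group1.
move=> p q; rewrite !inE => /forallP Hp /forallP Hq; apply/forallP => om.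
by rewrite pwM groupM.
Qed.

Lemma P_H p om : p \in P -> p om \in H.
Proof.
move=> Pp; have : p \in Group Hvs_gs.
  apply: (subsetP _ _ Pp); rewrite gen_subG; apply/subsetP => _ /imsetP[j _ ->].
  rewrite inE; apply/forallP => om'; rewrite ffunE; case: ifP => // Hom.
    exact: extt_in (forallP Hom).
by rewrite inE => /forallP.
Qed.

Definition Rset := [set p : PW | pb (exists r : fword, [/\ wbnd N r, weval (noconst G) g r = gone G & Ev r = p])].

Lemma RsetP p : reflect (exists r : fword, [/\ wbnd N r, weval (noconst G) g r = gone G & Ev r = p]) (p \in Rset).
Proof. by rewrite inE; apply: pbP. Qed.

Lemma Rgs : group_set Rset.
Proof.
apply/group_setP; split; first by apply/RsetP; exists wone; rewrite Ev1.
move=> p q /RsetP[r [br er <-]] /RsetP[r' [br' er' <-]].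
apply/RsetP; exists (wmul r r'); split; rewrite ?EvM //=; first by rewrite br br'.
by rewrite er er' gmul1.
Qed.

Definition Rb := Group Rgs.

Lemma sRP : Rb \subset P.
Proof. by apply/subsetP => p /RsetP[r [_ _ <-]]; apply: EvP. Qed.

Lemma nRP : P \subset 'N(Rb).
Proof.
rewrite gen_subG; apply/subsetP => _ /imsetP[j _ ->]; rewrite inE.
apply/subsetP => z; rewrite mem_conjg => /RsetP[r [br er Er]].
apply/RsetP; exists (wmul (winv (wvar _ j)) (wmul r (wvar _ j))); split.
- by rewrite /= br ltn_ord.
- by rewrite /= er gmul1 gmulV.
- by rewrite EvM EvV EvM Er; exact: conjgKV.
Qed.

Lemma EvN w : Ev w \in 'N(Rb).
Proof. exact: subsetP nRP _ (EvP w). Qed.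

Definition Q := (P / Rb)%G.

Definition xv (y : gT) : fword := wvar _ (index y eH).

Lemma idx_N y : y \in H -> index y eH < N.
Proof. by move=> Hy; rewrite (leq_trans (idx_n Hy)) // leq_addr. Qed.

Definition phi (y : gT) : coset_of Rb := coset Rb (Ev (xv y)).

Lemma phiM : {in H &, {morph phi : x y / x * y}}.
Proof.
move=> y z Hy Hz; rewrite /phi -morphM ?EvN //.
have eq : Ev (xv (y * z)) = (Ev (xv y) * Ev (xv z)) * Ev (wmul (winv (wmul (xv y) (xv z))) (xv (y * z))).
  by rewrite EvM EvV EvM mulKVg.
rewrite eq coset_kerr //.
apply/RsetP; exists (wmul (winv (wmul (xv y) (xv z))) (xv (y * z))); split => //.
  by rewrite /= !idx_N ?groupM.
rewrite /= !g_idx ?groupM // fM //.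
exact: gmulV.
Qed.

Definition phim := Morphism phiM.

Lemma phi_inj : {in H &, injective phi}.
Proof.
move=> y z Hy Hz e.
have : coset Rb (Ev (wmul (xv y) (winv (xv z)))) = 1.
  rewrite EvM EvV morphM ?morphV ?groupV ?EvN //.
  by move: e; rewrite /phi /= => ->; rewrite mulgV.
move/(coset_idr (EvN _)) => /RsetP[r [br er Er]].
pose l := wmul (wmul (xv y) (winv (xv z))) (winv r).
have El : Ev l = 1 by rewrite /l EvM EvV Er mulgV.
have el : weval (noconst G) g l = f (y * z^-1).
  by rewrite /l /= er ginv1 gmul1r !g_idx // fM ?groupV // fV.
have Sh : SS (f (y * z^-1)) by exists (y * z^-1); rewrite ?groupM ?groupV.
have [a' [Sa' ea']] := vc Sh (ex_intro _ g el).
pose s' i := proj1_sig (constructive_indefinite_description _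
    (let: ex_intro2 x Hx ex := Sa' i in ex_intro (fun x => x \in H /\ f x = a' i) x (conj Hx ex))).
have s'P : forall i, s' i \in H /\ f (s' i) = a' i.
  by move=> i; rewrite /s'; case: constructive_indefinite_description.
have Hs' : forall i, s' i \in H by move=> i; case: (s'P i).
have [Hl fl] := f_ev l Hs'.
have bl : wbnd N l by rewrite /l /= !idx_N // br.
have : ev s' l = y * z^-1.
  apply: finj => //; first by rewrite groupM ?groupV.
  rewrite fl -ea'; apply: weval_ext => i; by case: (s'P i).
pose om : Om := [ffun j : 'I_N => s' j].
have Hom : Hv om by apply/forallP => j; rewrite ffunE.
rewrite (@weval_bnd (fingrp gT) _ _ s' (extt om) N) //; last first.
  by move=> i li; rewrite extt_lt ffunE.
have := congr1 (fun p : PW => p om) El; rewrite ffunE Hom pw1 => -> /esym/eqP.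
by rewrite -eq_mulgV1 => /eqP.
Qed.

Lemma phim_inj : 'injm phim.
Proof. by apply/injmP; exact: phi_inj. Qed.

Definition K := (phim @* H)%G.

Lemma sKQ : K \subset Q.
Proof.
apply/subsetP => _ /morphimP[y _ Hy ->].
exact: (@mem_quotient _ Rb _ P (EvP _)).
Qed.


Lemma phi_mono z : z \in monolith H -> phi z \in monolith K.
Proof.
move=> Mz; have Hz : z \in H by move: Mz; rewrite inE => /andP[].
rewrite /monolith inE; apply/andP; split.
  exact: (mem_morphim phim Hz Hz).
apply/bigcapP => N /andP[nNK ntN].
have sNK : N \subset phim @* H by case/andP: nNK.
have nN' : phim @*^-1 N <| H.
  have := morphpre_normal sNK (subxx (phim @* H)); rewrite nNK.
  by rewrite injmK ?phim_inj.
have ntN' : phim @*^-1 N != 1.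
  apply: contra ntN => /eqP e; apply/eqP.
  by rewrite -(morphpreK sNK) e morphim1.
have : z \in phim @*^-1 N.
  apply: (subsetP _ _ Mz); apply: subset_trans (subsetIr _ _) _.
  by apply: (bigcap_inf (phim @*^-1 N)%G); rewrite nN' ntN'.
by case/morphpreP.
Qed.

Lemma nabK : ~~ abelian (monolith K).
Proof.
have [x [y [Mx My nxy]]] := nonab_pair nab.
have Hx : x \in H by move: Mx; rewrite inE => /andP[].
have Hy : y \in H by move: My; rewrite inE => /andP[].
apply/negP => ab.
have c := (centsP ab) _ (phi_mono Mx) _ (phi_mono My).
move/commgP: c; rewrite -[phi x]/(phim x) -[phi y]/(phim y) -morphR //.
rewrite -(morph1 phim) => /eqP e.
by move: nxy; rewrite (phi_inj _ _ e) ?eqxx // groupR.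
Qed.

Lemma lawsK : satisfies_identities_of K Q.
Proof.
move=> u v hK b Qb.
have hH : forall s : nat -> gT, (forall i, s i \in H) -> ev s u = ev s v.
  move=> s Hs.
  have [Hu eu] := ev_morph (morphM phim) u Hs.
  have [Hv ev] := ev_morph (morphM phim) v Hs.
  apply: phi_inj => //; rewrite -[phi _]/(phim _) eu -[phi _]/(phim _) ev.
  apply: hK => i; exact: mem_morphim.
have pP : forall i, exists z, z \in P /\ b i = coset Rb z.
  by move=> i; case/morphimP: (Qb i) => z _ Pz ->; exists z.
pose p i := proj1_sig (constructive_indefinite_description _ (pP i)).
have pS : forall i, p i \in P /\ b i = coset Rb (p i).
  by move=> i; rewrite /p; case: constructive_indefinite_description.
have Np : forall i, p i \in 'N(Rb) by move=> i; exact: subsetP nRP _ (proj1 (pS i)).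
have eb : forall w : fword, weval (noconst (fingrp (coset_of Rb))) b w =
    coset Rb (weval (noconst (fingrp PW)) p w).
  move=> w; rewrite (proj2 (ev_morph (morphM (coset_morphism Rb)) w Np)).
  by apply: weval_ext => i; rewrite (proj2 (pS i)).
rewrite !eb; congr (coset Rb _); apply/ffunP => om; rewrite !ev_pw; apply: hH => i.
exact: P_H (proj1 (pS i)).
Qed.

Lemma Ev_ev w : Ev w = weval (noconst (fingrp PW)) (fun j => Ev (wvar _ j)) w.
Proof.
elim: w => /= [i|[]||u IHu v IHv|u IHu].
- by [].
- exact: Ev1.
- by rewrite EvM IHu IHv.
- by rewrite EvV IHu.
Qed.

Lemma part1_sol : exists a' : nat -> G, (forall i, SS (a' i)) /\
  forall k, weval (@proj1_sig _ _) a' (sys k).1 = weval (@proj1_sig _ _) a' (sys k).2.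
Proof.
have [rho [rM [ridem rim]]] := part2 nabK sKQ lawsK.
have rho_in : forall q, q \in Q -> rho q \in K.
  by move=> q Qq; rewrite -rim; apply: imset_f.
have rho_K : forall k, k \in K -> rho k = k.
  by move=> k; rewrite -rim => /imsetP[q Qq ->]; rewrite ridem.
have cQ : forall p, p \in P -> coset Rb p \in Q.
  by move=> p Pp; exact: (@mem_quotient _ Rb _ P Pp).
pose psi p := invm phim_inj (rho (coset Rb p)).
have psiM : {in P &, {morph psi : x y / x * y}}.
  move=> p q Pp Pq; rewrite /psi morphM ?(subsetP nRP) // rM ?cQ //.
  by rewrite morphM ?rho_in ?cQ.
pose sigma j := psi (Ev (wvar _ j)).
have sigmaH : forall j, sigma j \in H.
  move=> j; rewrite /sigma /psi; case/morphimP: (rho_in _ (cQ _ (EvP (wvar _ j)))) => y _ Hy ->.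
  by rewrite invmE.
have sigma_idx : forall y, y \in H -> sigma (index y eH) = y.
  move=> y Hy; rewrite /sigma /psi -/(xv y) -/(phi y) rho_K.
    by rewrite -[phi y]/(phim y) invmE.
  exact: (mem_morphim phim Hy Hy).
have psi_ev : forall w, psi (Ev w) = ev sigma w.
  move=> w; rewrite Ev_ev.
  by rewrite (proj2 (ev_morph psiM w (fun j => EvP (wvar _ j)))).
have back : forall w, weval (@proj1_sig _ _) (fun i => f (sigma (n + i))) w = f (ev sigma (tr w)).
  elim=> /= [i|c||u IHu v IHv|u IHu].
  - by [].
  - by case: (yc_spec c) => Hy ey; rewrite sigma_idx.
  - by rewrite f1.
  - rewrite IHu IHv fM //; by case: (f_ev (tr u) sigmaH) => Hu _; case: (f_ev (tr v) sigmaH).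
  - by rewrite IHu fV //; case: (f_ev (tr u) sigmaH).
exists (fun i => f (sigma (n + i))); split.
  by move=> i; exists (sigma (n + i)).
move=> k; rewrite !back; congr (f _).
pose r := wmul (tr (sys k).1) (winv (tr (sys k).2)).
have Rr : Ev r \in Rb.
  apply/RsetP; exists r; split => //.
    by rewrite /r /=; case/andP: (sys_bnd k) => -> ->.
  by rewrite /r /= -!trE sol gmulVr.
have : psi (Ev r) = 1.
  rewrite /psi coset_id //.
  have -> : rho 1 = 1 by apply: (morph1_in (D := Q)).
  exact: morph1.
by rewrite psi_ev /r /= => /eqP; rewrite -eq_mulgV1 => /eqP.
Qed.

End Part1.

Theorem theorem1 (gT : finGroupType) (H : {group gT}) :
  ~~ abelian (monolith H) ->
  strongly_verbally_closed (fingrp gT) (fun x => x \in H) /\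
  (forall G : {group gT}, H \subset G -> satisfies_identities_of H G ->
     retract G H).
Proof.
move=> nab; split; last by move=> G sHG laws; exact: part2.
move=> G f fM finj vc nsys sys [a sol].
exact: (@part1_sol gT H nab G f fM finj vc nsys sys a sol).
Qed.
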